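(* For all positive integers $d,k$ and every real $q\ge 1$ there exists $q'_0$ such that for every $q'\ge q'_0$ the following holds. Let $X$ be a subset of $\mathbb Q^d_q \cap B^d(\mathbf 0, 2k)$. Then for any $\mathbf x \in CH(X) \cap \mathbb Q_q^d$ there exist $\lambda_1, \dots, \lambda_r \geq 0$ and $\mathbf x_1, \dots, \mathbf x_r \in X$ such that $r \leq d+1$, each $\lambda_j$ is $q'$-rational, $\sum_{j \in [r]} \lambda_{j} =1$, and $\mathbf x = \sum_{j \in [r]} \lambda_j \mathbf x_j$.
   Context: A real number $x$ is $q$-rational if $x=a/b$ for integers $a,b$ with $1\le b\le q$. $\mathbb Q^d_q$ is the set of points of $\mathbb R^d$ all of whose coordinates are $q$-rational. $B^d(\mathbf x,r)=\{\mathbf z\in\mathbb R^d:\|\mathbf z-\mathbf x\|\le r\}$. $CH(X)$ is the convex hull of $X$, i.e. the set of finite convex combinations $\sum_j\lambda_j\mathbf x_j$ with $\mathbf x_j\in X$, $\lambda_j\in[0,1]$, $\sum_j\lambda_j=1$. *)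

(* Defs.v *)
From HB Require Import structures.
From mathcomp Require Import all_boot all_order all_algebra.
From mathcomp Require Import reals.
Set Implicit Arguments. Unset Strict Implicit. Unset Printing Implicit Defensive.
Import Order.TTheory GRing.Theory Num.Theory.
Local Open Scope ring_scope.

Definition qrational (R : realType) (q x : R) : Prop :=
  exists (a : int) (b : int), 1 <= b /\ b%:~R <= q /\ x = a%:~R / b%:~R.

Definition qrat_pt (R : realType) (d : nat) (q : R) (x : 'rV[R]_d) : Prop :=
  forall i : 'I_d, qrational q (x 0 i).

Definition enorm (R : realType) (d : nat) (v : 'rV[R]_d) : R :=
  Num.sqrt (\sum_(i < d) v 0 i ^+ 2).

Definition ball_cl (R : realType) (d : nat) (x : 'rV[R]_d) (r : R)
  (z : 'rV[R]_d) : Prop := enorm (z - x) <= r.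

Definition CH (R : realType) (d : nat) (X : 'rV[R]_d -> Prop) (x : 'rV[R]_d)
  : Prop :=
  exists (n : nat) (lam : 'I_n -> R) (xs : 'I_n -> 'rV[R]_d),
    (forall j, X (xs j)) /\ (forall j, 0 <= lam j <= 1) /\
    \sum_(j < n) lam j = 1 /\ x = \sum_(j < n) lam j *: xs j.

(* Main.v *)
Require Import Defs.
From HB Require Import structures.
From mathcomp Require Import all_boot all_order all_algebra.
From mathcomp Require Import reals perm zify ring lra.
Import Order.TTheory GRing.Theory Num.Theory.
Local Open Scope ring_scope.

Lemma det_int (R : realType) n (A : 'M[R]_n) :
  (forall i j, A i j \is a Num.int) -> \det A \is a Num.int.
Proof.
move=> h; rewrite /determinant; apply: rpred_sum => s _; apply: rpredM.
  by apply: rpredX; rewrite rpredN rpred1.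
by apply: rpred_prod => i _; exact: h.
Qed.

Lemma det_bound (R : realType) n (A : 'M[R]_n) (M : R) : 0 <= M ->
  (forall i j, `|A i j| <= M) -> `|\det A| <= n`!%:R * M ^+ n.
Proof.
move=> M0 h; rewrite /determinant; apply: le_trans (ler_norm_sum _ _ _) _.
apply: le_trans (_ : \sum_(s : 'S_n) M ^+ n <= _).
  apply: ler_sum => s _; rewrite normrM normr_sign mul1r normr_prod.
  apply: le_trans (_ : \prod_(i < n) M <= _); last by rewrite prodr_const card_ord.
  apply: ler_prod => i _.
  by rewrite normr_ge0 h.
by rewrite sumr_const card_Sn mulr_natl.
Qed.

Lemma mulmx_int (R : realType) a b c (A : 'M[R]_(a, b)) (B : 'M[R]_(b, c)) :
  (forall i j, A i j \is a Num.int) -> (forall i j, B i j \is a Num.int) ->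
  forall i j, (A *m B) i j \is a Num.int.
Proof.
move=> hA hB i j; rewrite mxE; apply: rpred_sum => k _; exact: rpredM.
Qed.

Lemma cramer (R : realType) r m (B : 'M[R]_(r, m)) (lam : 'rV[R]_r) (c : 'rV[R]_m) :
  row_free B -> (forall i j, B i j \is a Num.int) ->
  (forall j, c 0 j \is a Num.int) -> lam *m B = c ->
  exists z : int, z != 0 /\ z%:~R = \det (B *m B^T) /\
    forall j, lam 0 j * z%:~R \is a Num.int.
Proof.
move=> fB iB ic Hc.
have Gu : B *m B^T \in unitmx.
  rewrite -row_free_unit; apply: inj_row_free => u Hu.
  have : (u *m B) *m (u *m B)^T = 0.
    by rewrite trmx_mul !mulmxA -(mulmxA u B) Hu !mul0mx.
  move=> HX; suff : u *m B = 0.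
    by move=> h; apply/eqP; rewrite -(mulmx_free_eq0 _ fB) h.
  move: HX; move: (u *m B) => w /matrixP/(_ 0 0); rewrite !mxE.
  under eq_bigr do rewrite mxE -expr2.
  move/eqP; rewrite psumr_eq0 => [/allP H|i _]; last by rewrite sqr_ge0.
  apply/matrixP => i j; rewrite ord1 mxE.
  have /H : j \in index_enum 'I_m by rewrite mem_index_enum.
  by rewrite sqrf_eq0 => /eqP.
have iG : forall i j, (B *m B^T) i j \is a Num.int.
  by apply: mulmx_int => // i j; rewrite mxE.
have := @det_int _ _ _ iG => /intrP[z hz].
have z0 : z != 0.
  apply/eqP => z0; move: Gu; rewrite unitmxE unitfE hz z0 /=.
  by rewrite eqxx.
exists z; split => //; split => // j.
have Hl : lam = (c *m B^T) *m invmx (B *m B^T).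
  by rewrite -Hc -(mulmxA lam B) mulmxK.
rewrite Hl /invmx Gu -scalemxAr mxE -hz mulrAC mulVf ?mul1r; last first.
  by rewrite hz intr_eq0.
apply: mulmx_int => i k.
  apply: mulmx_int => a b; last by rewrite mxE; apply: iB.
  by rewrite ord1; apply: ic.
rewrite mxE /cofactor; apply: rpredM; first by apply: rpredX; rewrite rpredN rpred1.
by apply: det_int => a b; rewrite !mxE; apply: rpred_sum => l _; rewrite mxE rpredM.
Qed.
Lemma exists_argmax (R : realDomainType) n (F : 'I_n.+1 -> R) :
  exists i0, forall j, F j <= F i0.
Proof.
case: (@arg_maxP _ _ _ ord0 xpredT F isT) => i _ h; exists i => j; exact: h.
Qed.

Lemma carath_step (R : realType) m n (v : 'I_n.+1 -> 'rV[R]_m.+1)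
  (lam : 'I_n.+1 -> R) :
  (forall j, v j 0 ord0 = 1) -> (forall j, 0 <= lam j) ->
  ~~ row_free (\matrix_j v j) ->
  exists i0 (mu : 'I_n.+1 -> R), (forall j, 0 <= mu j) /\ mu i0 = 0 /\
    \sum_j lam j *: v j = \sum_j mu j *: v j.
Proof.
move=> hv hl nf.
have [u u0 hu] : exists2 u : 'rV[R]_n.+1, u != 0 & \sum_j u 0 j *: v j = 0.
  move: nf; rewrite -kermx_eq0 => nK.
  set K := kermx _ in nK.
  case: (pickP (fun i => row i K != 0)) => [i hi|h]; last first.
    exfalso; move/negP: nK; apply; apply/eqP/row_matrixP => i; rewrite row0.
    by apply/eqP; move: (h i) => /negbFE.
  exists (row i K) => //.
  have : row i K *m (\matrix_j v j) = 0 by rewrite -row_mul mulmx_ker row0.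
  by rewrite mulmx_sum_row; under eq_bigr do rewrite rowK.
have su : \sum_j u 0 j = 0.
  have := congr1 (fun M : 'rV[R]_m.+1 => M 0 ord0) hu; rewrite /= summxE.
  rewrite (_ : (0 : 'rV[R]_m.+1) 0 ord0 = 0) ?mxE // => h.
  apply: (etrans _ h); apply: eq_bigr => j _; by rewrite mxE hv mulr1.
case: (pickP (fun j => lam j == 0)) => [i0 /eqP h0 | hpos].
  by exists i0, lam.
have lpos : forall j, 0 < lam j.
  by move=> j; rewrite lt_def hl andbT; move: (hpos j) => /= ->.
have [j1 hj1] : exists j, 0 < u 0 j.
  case: (pickP (fun j => 0 < u 0 j)) => [j hj|h]; first by exists j.
  exfalso; move/negP: u0; apply; apply/eqP/matrixP => a j; rewrite ord1 mxE.
  have : \sum_j (- u 0 j) == 0 by rewrite sumrN su oppr0.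
  rewrite psumr_eq0 => [/allP H | i _]; last by rewrite oppr_ge0 leNgt h.
  have /H : j \in index_enum 'I_n.+1 by rewrite mem_index_enum.
  by rewrite oppr_eq0 => /eqP.
case: (@exists_argmax _ _ (fun j => u 0 j / lam j)) => i0 hi0.
set s := u 0 i0 / lam i0 in hi0.
have s0 : 0 < s by apply: lt_le_trans (hi0 j1); rewrite divr_gt0.
have ui0 : u 0 i0 != 0.
  by apply/eqP => h; move: s0; rewrite /s h mul0r ltxx.
exists i0, (fun j => lam j - u 0 j / s); split; [|split].
- move=> j; rewrite subr_ge0 ler_pdivrMr //.
  have := hi0 j; rewrite ler_pdivrMr // => h.
  by rewrite mulrC.
- by rewrite /s invf_div mulrCA divff ?mulr1 ?subrr.
- under [in RHS]eq_bigr do rewrite scalerBl.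
  rewrite sumrB (_ : \sum_j (u 0 j / s) *: v j = 0) ?subr0 //.
  under eq_bigr do rewrite mulrC -scalerA.
  by rewrite -scaler_sumr hu scaler0.
Qed.

Lemma carath (R : realType) m n (v : 'I_n -> 'rV[R]_m.+1) (lam : 'I_n -> R) :
  (forall j, v j 0 ord0 = 1) -> (forall j, 0 <= lam j) ->
  exists r (f : 'I_r -> 'I_n) (mu : 'I_r -> R), (forall j, 0 <= mu j) /\
    \sum_j lam j *: v j = \sum_j mu j *: v (f j) /\
    row_free (\matrix_(j < r) v (f j)).
Proof.
elim: n v lam => [|n IH] v lam hv hl.
  exists 0%N, id, lam; split => //; split => //.
  by rewrite /row_free -leqn0 rank_leq_row.
case: (boolP (row_free (\matrix_j v j))) => [fV|nf].
  by exists n.+1, id, lam.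
have [i0 [mu [hmu [h0 hs]]]] := @carath_step _ _ _ _ _ hv hl nf.
have [r [f [mu' [hmu' [hs' hf]]]]] := IH (fun j => v (lift i0 j))
  (fun j => mu (lift i0 j)) (fun j => hv _) (fun j => hmu _).
exists r, (fun j => lift i0 (f j)), mu'; split => //; split => //.
by rewrite hs (bigD1_ord i0) //= h0 scale0r add0r.
Qed.

Lemma int_scale (R : realType) (q y : R) (N : nat) :
  q <= N%:R -> qrational q y -> N`!%:R * y \is a Num.int.
Proof.
move=> hN [a [b [b1 [bq ->]]]].
case: b b1 bq => [nb|nb] b1 bq; last by [].
have nb0 : (0 < nb)%N by [].
have nbN : (nb <= N)%N by rewrite -(ler_nat R); apply: le_trans hN.
have /dvdnP[c hc] : (nb %| N`!)%N by rewrite dvdn_fact // nb0 nbN.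
apply/intrP; exists (c%:Z * a).
rewrite hc natrM rmorphM /= !pmulrn.
have : (nb%:R : R) != 0 by rewrite pnatr_eq0 -lt0n.
by move=> h; field.
Qed.

Lemma coord_bound (R : realType) d (y : 'rV[R]_d) (K : R) :
  ball_cl 0 K y -> forall i, `|y 0 i| <= K.
Proof.
rewrite /ball_cl /enorm subr0 => h i; apply: le_trans h.
rewrite -sqrtr_sqr ler_sqrt; last by apply: sumr_ge0 => j _; rewrite sqr_ge0.
rewrite (bigD1 i) //= lerDl; apply: sumr_ge0 => j _; exact: sqr_ge0.
Qed.

Lemma sum_row_mx (R : realType) d n (L : R) (a : 'I_n -> R) (y : 'I_n -> 'rV[R]_d) :
  \sum_j a j *: row_mx (1 : 'rV[R]_1) (L *: y j) =
  row_mx ((\sum_j a j) *: 1) (L *: \sum_j a j *: y j).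
Proof.
apply/matrixP => i l; rewrite summxE !mxE.
under eq_bigr do rewrite !mxE.
case: (split l) => a0.
  by rewrite -mulr_suml [RHS]mxE.
rewrite mxE summxE mulr_sumr; apply: eq_bigr => j _.
by rewrite !mxE mulrCA.
Qed.

Theorem proposition3p2 (R : realType) (d k : nat) (hd : (0 < d)%N) (hk : (0 < k)%N)
  (q : R) (hq : 1 <= q) :
  exists q0 : R, forall q' : R, q0 <= q' ->
  forall X : 'rV[R]_d -> Prop,
    (forall y, X y -> qrat_pt q y /\ ball_cl 0 (2 * k%:R) y) ->
  forall x : 'rV[R]_d, CH X x -> qrat_pt q x ->
  exists (r : nat) (lam : 'I_r -> R) (xs : 'I_r -> 'rV[R]_d),
    (r <= d.+1)%N /\
    (forall j, 0 <= lam j) /\ (forall j, X (xs j)) /\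
    (forall j, qrational q' (lam j)) /\
    \sum_(j < r) lam j = 1 /\ x = \sum_(j < r) lam j *: xs j.
Proof.
pose N := (Num.truncn q).+1.
have hqN : q <= N%:R by apply: ltW; apply: truncnS_gt.
pose L : R := (N`!)%:R.
have L0 : 0 < L by rewrite ltr0n fact_gt0.
pose M0 : R := L * (2 * k%:R) + 1.
have M01 : 1 <= M0.
  have : 0 <= L * (2 * k%:R) by apply: mulr_ge0; [exact: ltW | apply: mulr_ge0].
  rewrite /M0; lra.

pose Mg : R := (1 + d)%:R * M0 ^+ 2.
have Mg1 : 1 <= Mg.
  rewrite /Mg mulr_ege1 // ?ler1n ?add1n //.
  by apply: exprn_ege1.
exists (((d.+1)`!)%:R * Mg ^+ d.+1).
move=> q' hq' X hX x [n [lam [xs [hxX [hl [hs hx]]]]]] hxq.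
pose v : 'I_n -> 'rV[R]_d.+1 := fun j => row_mx (1 : 'rV[R]_1) (L *: xs j).
have hv : forall j, v j 0 ord0 = 1.
  move=> j; rewrite /v mxE; case: splitP => [a _|a /= h]; first by rewrite ord1 mxE.
  by [].
have hl0 : forall j, 0 <= lam j by move=> j; case/andP: (hl j).
have [r [f [mu [hmu [hsum hfree]]]]] := @carath _ _ _ v lam hv hl0.
have hr : (r <= d.+1)%N.
  by move: hfree; rewrite /row_free => /eqP <-; apply: rank_leq_col.
have E1 : \sum_j lam j *: v j = row_mx 1 (L *: x).
  by rewrite /v sum_row_mx hs scale1r -hx.
have E2 : \sum_j mu j *: v (f j) =
    row_mx ((\sum_j mu j) *: 1) (L *: \sum_j mu j *: xs (f j)).
  by rewrite /v (@sum_row_mx _ _ _ L mu (fun j => xs (f j))).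
have := hsum; rewrite E1 E2 => hrm; have [h1 h2] := @eq_row_mx _ 1 1 d _ _ _ _ hrm.
have hmu1 : \sum_j mu j = 1.
  have := congr1 (fun M : 'rV[R]_1 => M 0 0) h1; rewrite /= !mxE /= mulr1.
  by move=> h; exact: (esym h).
have hxs : x = \sum_j mu j *: xs (f j).
  by apply: (scalerI (lt0r_neq0 L0)).
have iB : forall i l, (\matrix_(j < r) v (f j)) i l \is a Num.int /\
    `|(\matrix_(j < r) v (f j)) i l| <= M0.
  move=> i l; rewrite mxE /v mxE; case: splitP => [a _|a _].
    by rewrite ord1 !mxE /= rpred1 normr1.
  rewrite mxE; have [hq1 hb] := hX _ (hxX (f i)); split.
    exact: int_scale hqN (hq1 a).
  rewrite normrM gtr0_norm // /M0.
  have := ler_wpM2l (ltW L0) (@coord_bound _ _ _ _ hb a); lra.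
have ic : forall l, (row_mx (1 : 'rV[R]_1) (L *: x)) 0 l \is a Num.int.
  move=> l; rewrite mxE; case: splitP => [a _|a _].
    by rewrite ord1 !mxE /= rpred1.
  by rewrite mxE; apply: int_scale hqN (hxq a).
have eqc : (\row_j mu j) *m (\matrix_(j < r) v (f j)) = row_mx 1 (L *: x).
  rewrite mulmx_sum_row -E1 hsum; apply: eq_bigr => j _.
  by rewrite rowK mxE.
have [z [z0 [hz hmuz]]] := @cramer _ _ _ _ _ _ hfree (fun i l => (iB i l).1) ic eqc.
have hG : forall i j, `|((\matrix_(j < r) v (f j)) *m (\matrix_(j < r) v (f j))^T) i j| <= Mg.
  move=> i j; rewrite mxE; apply: le_trans (ler_norm_sum _ _ _) _.
  apply: le_trans (_ : \sum_(l < 1 + d) M0 ^+ 2 <= _).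
    apply: ler_sum => l _; rewrite [X in `|_ * X|]mxE normrM expr2.
    by apply: ler_pM => //; [exact: (iB i l).2 | exact: (iB j l).2].
  by rewrite sumr_const card_ord /Mg mulr_natl.
have hdet := @det_bound _ _ _ Mg (le_trans ler01 Mg1) hG.
have hzq : `|z%:~R : R| <= q'.
  rewrite hz; apply: le_trans hdet _; apply: le_trans _ hq'.
  apply: ler_pM => //; first by rewrite exprn_ge0 // (le_trans ler01 Mg1).
    by rewrite ler_nat leq_fact.
  exact: ler_weXn2l.
exists r, mu, (fun j => xs (f j)).
split => //; split => //; split => [j|]; first exact: hxX.
split => //; move=> j.
have := hmuz j; rewrite mxE => /intrP [e he].
have zR0 : (z%:~R : R) != 0 by rewrite intr_eq0.
have hmuj : mu j = e%:~R / z%:~R by rewrite -he mulfK.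
case: (ltgtP z 0) => hz0; last by move: z0; rewrite hz0 eqxx.
  exists (-e), (-z); split; first lia.
  split; first by move: hzq; rewrite ltr0_norm ?ltrz0 // intrN.
by rewrite hmuj !intrN invrN mulrNN.
exists e, z; split; first lia.
split; first by move: hzq; rewrite gtr0_norm ?ltr0z.
exact: hmuj.
Qed.
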